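(* Let $\mathcal S$ be an ash on a set $S$, let $\mu:S\to\{2\}$, and let $\mathcal A_{\mathcal S}$ be the set of (isomorphism types of) finite relational structures $\mathfrak A=(A;(R_s)_{s\in S})$ of signature $\mu$ such that for all $x,y,z\in A$ and $s,t\in S$: (1) $\neg R_s(x,x)$; (2) if $R_s(x,y)$ then $R_s(y,x)$; (3) if $R_s(x,y)$ and $R_t(x,y)$ then $s=t$, and if $R_s(x,y)$ and $R_s(x,z)$ then $y=z$; (4) if $x\neq y$ there is $r\in S$ with $R_r(x,y)$; (5) every non-empty subset of $\{r\in S:\exists u\in A\ R_r(x,u)\}$ is an element of $\mathcal S$. Then $\mathcal A_{\mathcal S}$ is an ideal of $\Omega_\mu$.
   Context: An ash on a set $S$ is a set $\mathcal S$ of finite subsets of $S$ such that: (a) $\{s\}\in\mathcal S$ for every $s\in S$; (b) for every finite subset $\mathcal F\subseteq\mathcal S$ there is $s\in S\setminus\bigcup\mathcal F$ with $\{s\}\cup F\in\mathcal S$ for every $F\in\mathcal F$; (c) for every $S'\subseteq S$ with $|S'|=|S|$ there is a finite $F\subseteq S'$ with $F\notin\mathcal S$. A relational structure of signature $\mu:S\to\{2\}$ is a set with a family of binary relations indexed by $S$. $\Omega_\mu$ is the set of isomorphism types of finite such structures, ordered by embeddability (embeddings are injective maps preserving and reflecting all relations). An ideal of $\Omega_\mu$ is a non-empty, downward closed, up-directed subset. *)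

(* Defs.v *)
From mathcomp Require Import all_boot.
From Stdlib Require Import List.
Set Implicit Arguments. Unset Strict Implicit. Unset Printing Implicit Defensive.

Definition finite_set {S : Type} (P : S -> Prop) : Prop :=
  exists l : list S, forall x, P x <-> List.In x l.

Definition same_card_as_whole {S : Type} (P : S -> Prop) : Prop :=
  exists f : {x : S | P x} -> S, bijective f.

Definition is_ash {S : Type} (A : (S -> Prop) -> Prop) : Prop :=
  (forall F, A F -> finite_set F) /\
  (forall s : S, A (fun x => x = s)) /\
  (* (b) finite families are given as lists *)
  (forall Fs : list (S -> Prop), (forall F, List.In F Fs -> A F) ->
     exists s : S, (forall F, List.In F Fs -> ~ F s) /\
                   (forall F, List.In F Fs -> A (fun x => x = s \/ F x))) /\
  (forall S' : S -> Prop, same_card_as_whole S' ->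
     exists F : S -> Prop, finite_set F /\ (forall x, F x -> S' x) /\ ~ A F).

(* Finite relational structures of signature mu : S -> {2}
   (every symbol binary); the universe is {0,...,n-1}. Every finite structure
   is isomorphic to one of these. *)
Record fstruct (S : Type) := FStruct {
  fsize : nat;
  frel : S -> 'I_fsize -> 'I_fsize -> Prop
}.
Arguments fsize {S} f.
Arguments frel {S} f s x y.

Definition embedding {S : Type} (B A : fstruct S) (f : 'I_(fsize B) -> 'I_(fsize A)) : Prop :=
  injective f /\ forall s x y, frel B s x y <-> frel A s (f x) (f y).

Definition embeds {S : Type} (B A : fstruct S) : Prop :=
  exists f, @embedding S B A f.

(* A subset of Omega_mu is represented by a class of finite structures;
   an ideal: non-empty, downward closed (under embeddability), up-directed. *)
Definition is_ideal_Omega {S : Type} (C : fstruct S -> Prop) : Prop :=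
  (exists A, C A) /\
  (forall A B, C A -> embeds B A -> C B) /\
  (forall A B, C A -> C B -> exists D, C D /\ embeds A D /\ embeds B D).

Definition in_A_ash {S : Type} (Ash : (S -> Prop) -> Prop) (A : fstruct S) : Prop :=
  forall (x y z : 'I_(fsize A)) (s t : S),
    ~ frel A s x x /\
    (frel A s x y -> frel A s y x) /\
    (frel A s x y -> frel A t x y -> s = t) /\
              (frel A s x y -> frel A s x z -> y = z) /\
    (x <> y -> exists r, frel A r x y) /\
    (forall T : S -> Prop, (exists r, T r) ->
                 (forall r, T r -> exists u, frel A r x u) -> Ash T).

(* Main.v *)
Require Import Defs.
From mathcomp Require Import all_boot.
From Stdlib Require Import List Classical FunctionalExtensionality PropExtensionality ClassicalDescription ClassicalEpsilon.
Set Implicit Arguments. Unset Strict Implicit. Unset Printing Implicit Defensive.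

Lemma predext {S : Type} (P Q : S -> Prop) : (forall r, P r <-> Q r) -> P = Q.
Proof. move=> H; apply: functional_extensionality => r; apply: propositional_extensionality; exact: H. Qed.

Definition nbr {S : Type} {N : nat} (lab : 'I_N -> 'I_N -> option S) x r :=
  exists u, lab x u = Some r.

Definition valid {S : Type} (Ash : (S -> Prop) -> Prop) (N : nat)
  (lab : 'I_N -> 'I_N -> option S) :=
  (forall x, lab x x = None) /\
  (forall x y, lab x y = lab y x) /\
  (forall x y z s, lab x y = Some s -> lab x z = Some s -> y = z) /\
  (forall x (T : S -> Prop), (exists r, T r) -> (forall r, T r -> nbr lab x r) -> Ash T).

Fixpoint collect {S : Type} {N : nat} (f : 'I_N -> option S) (us : list 'I_N) : list S :=
  match us with
  | nil => nil
  | u :: us' => match f u with Some r => r :: collect f us' | None => collect f us' end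
  end.

Lemma collectP S N (f : 'I_N -> option S) us r :
  List.In r (collect f us) <-> exists u, List.In u us /\ f u = Some r.
Proof.
elim: us => [|u us IH] /=; first by split => // [[u []]].
case E: (f u) => [a|]; split.
- case=> [<-|H]; first by exists u; auto.
  by have [v [Hv Hf]] := proj1 IH H; exists v; auto.
- case=> v [[<-|Hv] Hf]; first by left; congruence.
  by right; apply/IH; exists v.
- by move=> H; have [v [Hv Hf]] := proj1 IH H; exists v; auto.
- case=> v [[<-|Hv] Hf]; first congruence.
  by apply/IH; exists v.
Qed.

Lemma mem_In (T : eqType) (x : T) s : x \in s -> List.In x s.
Proof.
elim: s => [|a s IH] //=; rewrite seq.in_cons => /orP [/eqP ->|H]; auto.
Qed.

Lemma nbr_list S N (lab : 'I_N -> 'I_N -> option S) x :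
  exists l, forall r, nbr lab x r <-> List.In r l.
Proof.
exists (collect (lab x) (enum 'I_N)) => r; rewrite collectP; split.
- by case=> u Hu; exists u; split => //; apply: mem_In; rewrite mem_enum.
- by case=> u [_ Hu]; exists u.
Qed.

Fixpoint powl {S : Type} (l : list S) : list (list S) :=
  match l with
  | nil => nil :: nil
  | a :: l' => powl l' ++ List.map (cons a) (powl l')
  end.

Lemma powl_sub S (l l' : list S) : List.In l' (powl l) -> forall r, List.In r l' -> List.In r l.
Proof.
elim: l l' => [|a l IH] l' /=; first by case=> // <-.
rewrite in_app_iff in_map_iff => [[H|[l0 [<- H]]]] r.
- by move=> Hr; right; exact: IH H r Hr.
- by case=> [->|Hr]; [left|right; exact: IH H r Hr].
Qed.

Lemma powl_complete S (l : list S) (P : S -> Prop) :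
  exists l', List.In l' (powl l) /\ forall r, List.In r l' <-> (List.In r l /\ P r).
Proof.
elim: l => [|a l [l0 [H0 H1]]] /=.
- by exists nil; split; [left|move=> r; split => // [[]]].
- case: (classic (P a)) => Pa.
  + exists (a :: l0); split; first by rewrite in_app_iff in_map_iff; right; exists l0.
    move=> r /=; rewrite H1; split.
    * by case=> [<-|[]]; auto.
    * by case=> [[<-|Hr] Pr]; auto.
  + exists l0; split; first by rewrite in_app_iff; left.
    move=> r; rewrite H1; split.
    * by case; auto.
    * by case=> [[<-|Hr] Pr]; auto.
Qed.

Definition Fs {S : Type} (l : list S) : list (S -> Prop) :=
  List.map (fun l' (r : S) => List.In r l')
    (List.filter (fun l' => match l' with nil => false | _ => true end) (powl l)).

Lemma FsP S (l : list S) F :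
  List.In F (Fs l) <-> exists l', F = (fun r => List.In r l') /\ List.In l' (powl l) /\ l' <> nil.
Proof.
rewrite /Fs in_map_iff; split.
- case=> l' [<- /filter_In [H1 H2]]; exists l'; split => //; split => //.
  by case: l' H1 H2.
- case=> l' [-> [H1 H2]]; exists l'; split => //; apply/filter_In; split => //.
  by case: l' H1 H2.
Qed.

Lemma side S (Ash : (S -> Prop) -> Prop) (P : S -> Prop) l s :
  (forall r, P r <-> List.In r l) ->
  (forall T, (exists r, T r) -> (forall r, T r -> P r) -> Ash T) ->
  Ash (fun r => r = s) ->
  (forall F, List.In F (Fs l) -> ~ F s /\ Ash (fun r => r = s \/ F r)) ->
  ~ P s /\ forall T, (exists r, T r) -> (forall r, T r -> P r \/ r = s) -> Ash T.
Proof.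
move=> HPl HP Hs HF; have nPs : ~ P s.
  move=> Ps; have [l' [H1 H2]] := powl_complete l (fun _ => True).
  have Hl' : l' <> nil by move=> E; move: (proj2 (H2 s)); rewrite E /=; apply; split => //; apply/HPl.
  have := HF (fun r => List.In r l'); case.
    by apply/FsP; exists l'.
  by move=> H _; apply: H; apply: (proj2 (H2 s)); split => //; apply/HPl.
split => // T Tne HT.
case: (classic (T s)) => Ts; last first.
  apply: HP => // r Tr; case: (HT r Tr) => // E; by subst.
case: (classic (exists r, T r /\ r <> s)) => [[r0 [Tr0 r0s]]|Hno].
- have [l' [H1 H2]] := powl_complete l T.
  have Pr0 : P r0 by case: (HT r0 Tr0).
  have Hl' : l' <> nil by move=> E; move: (proj2 (H2 r0)); rewrite E /=; apply; split => //; apply/HPl.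
  have [_ HA] := HF (fun r => List.In r l') (proj2 (FsP _ _) (ex_intro _ l' (conj erefl (conj H1 Hl')))).
  have -> : T = (fun r => r = s \/ List.In r l') => //.
  apply: predext => r; split.
  + move=> Tr; case: (classic (r = s)) => rs; first by left.
    right; apply/H2; split => //; apply/HPl; by case: (HT r Tr).
  + by case=> [->|/H2 []].
- have -> : T = (fun r => r = s) => //.
  apply: predext => r; split; last by move=> ->.
  move=> Tr; apply: NNPP => rs; apply: Hno; by exists r.
Qed.

Lemma fresh S (Ash : (S -> Prop) -> Prop) N (lab : 'I_N -> 'I_N -> option S) (x y : 'I_N) :
  is_ash Ash -> valid Ash lab ->
  exists s, ~ nbr lab x s /\ ~ nbr lab y s /\
   (forall T, (exists r, T r) -> (forall r, T r -> nbr lab x r \/ r = s) -> Ash T) /\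
   (forall T, (exists r, T r) -> (forall r, T r -> nbr lab y r \/ r = s) -> Ash T).
Proof.
move=> [_ [Ha [Hb _]]] [_ [_ [_ H5]]].
have [lx Hx] := nbr_list lab x; have [ly Hy] := nbr_list lab y.
have HFs : forall z l, (forall r, nbr lab z r <-> List.In r l) -> forall F, List.In F (Fs l) -> Ash F.
  move=> z l Hl F /FsP [l' [-> [H1 H2]]].
  apply: (H5 z); first by case: l' H1 H2 => // a l'' _ _; exists a; left.
  move=> r Hr; apply/Hl; exact: powl_sub H1 r Hr.
have [s [Hs1 Hs2]] := Hb (Fs lx ++ Fs ly)
   (fun F HF => match proj1 (in_app_iff _ _ _) HF with
                | or_introl H => HFs x lx Hx F H
                | or_intror H => HFs y ly Hy F H end).
have [nx Ax] := @side S Ash (nbr lab x) lx s Hx (H5 x) (Ha s)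
  (fun F HF => conj (Hs1 F (proj2 (in_app_iff _ _ _) (or_introl HF)))
                    (Hs2 F (proj2 (in_app_iff _ _ _) (or_introl HF)))).
have [ny Ay] := @side S Ash (nbr lab y) ly s Hy (H5 y) (Ha s)
  (fun F HF => conj (Hs1 F (proj2 (in_app_iff _ _ _) (or_intror HF)))
                    (Hs2 F (proj2 (in_app_iff _ _ _) (or_intror HF)))).
by exists s.
Qed.

Definition upd {S : Type} {N : nat} (lab : 'I_N -> 'I_N -> option S) (x y : 'I_N) (s : S) u v :=
  if ((u == x) && (v == y)) || ((u == y) && (v == x)) then Some s else lab u v.

Lemma condP N (x y u v : 'I_N) :
  ((u == x) && (v == y)) || ((u == y) && (v == x)) -> (u = x /\ v = y) \/ (u = y /\ v = x).
Proof. by case/orP => /andP [/eqP -> /eqP ->]; auto. Qed.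

Lemma step S (Ash : (S -> Prop) -> Prop) N (lab : 'I_N -> 'I_N -> option S) (x y : 'I_N) :
  is_ash Ash -> valid Ash lab -> x <> y -> lab x y = None ->
  exists lab', valid Ash lab' /\ (forall u v t, lab u v = Some t -> lab' u v = Some t) /\
    (forall u v, lab' u v = None -> lab u v = None) /\ lab' x y <> None.
Proof.
move=> HA Hv xy Hxy.
have [s [nx [ny [Ax Ay]]]] := fresh x y HA Hv.
have [H1 [H2 [H3 H5]]] := Hv.
have Hyx : lab y x = None by rewrite H2.
have Hn : forall u r, nbr (upd lab x y s) u r -> nbr lab u r \/ ((u = x \/ u = y) /\ r = s).
  move=> u r [v]; rewrite /upd; case C: (_ || _).
  - by case=> <-; right; split => //; case: (condP C) => [[-> _]|[-> _]]; auto.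
  - by move=> H; left; exists v.
exists (upd lab x y s); split; last split; last split.
- split; last split; last split.
  + move=> u; rewrite /upd; case C: (_ || _) => //.
    by case: (condP C) => [[E1 E2]|[E1 E2]]; exfalso; apply: xy; congruence.
  + move=> u v; rewrite /upd orbC [X in X || _]andbC [X in _ || X]andbC.
    by case: (_ || _).
  + move=> u v w t; rewrite /upd; case Cv: (_ || _); case Cw: (_ || _).
    * case: (condP Cv) => [[E1 E2]|[E1 E2]]; case: (condP Cw) => [[E3 E4]|[E3 E4]];
        subst => //; exfalso; apply: xy; congruence.
    * case=> <- Hw; exfalso.
      by case: (condP Cv) => [[E1 E2]|[E1 E2]]; subst; [apply: nx|apply: ny]; exists w.
    * move=> Hv' [Et]; subst t; exfalso.
      by case: (condP Cw) => [[E1 E2]|[E1 E2]]; subst; [apply: nx|apply: ny]; exists v.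
    * exact: H3.
  + move=> u T Tne HT.
    case: (classic (u = x)) => [E|ux].
      subst u; apply: Ax => // r Tr; case: (Hn _ _ (HT r Tr)) => [|[_ ->]]; auto.
    case: (classic (u = y)) => [E|uy].
      subst u; apply: Ay => // r Tr; case: (Hn _ _ (HT r Tr)) => [|[_ ->]]; auto.
    apply: (H5 u) => // r Tr; case: (Hn _ _ (HT r Tr)) => // [[[]]] //.
- move=> u v t; rewrite /upd; case C: (_ || _) => // H.
  by case: (condP C) => [[E1 E2]|[E1 E2]]; subst; congruence.
- by move=> u v; rewrite /upd; case: (_ || _).
- by rewrite /upd !eqxx.
Qed.

Definition NS {S : Type} {N : nat} (lab : 'I_N -> 'I_N -> option S) : {set 'I_N * 'I_N} :=
  [set p | ~~ isSome (lab p.1 p.2)].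

Lemma complete S (Ash : (S -> Prop) -> Prop) N k : forall lab : 'I_N -> 'I_N -> option S,
  is_ash Ash -> valid Ash lab -> #|NS lab| <= k ->
  exists lab', valid Ash lab' /\ (forall x y, x <> y -> lab' x y <> None) /\
     (forall u v t, lab u v = Some t -> lab' u v = Some t).
Proof.
elim: k => [|k IH] lab HA Hv Hk;
  (case: (classic (exists x y, x <> y /\ lab x y = None)) => [[x [y [xy Hxy]]]|Hno];
   [| exists lab; split => //; split => // x y xy E; apply: Hno; by exists x, y]);
  have [lab1 [Hv1 [He1 [Hn1 Hxy1]]]] := step HA Hv xy Hxy;
  (have Hlt : #|NS lab1| < #|NS lab|;
   [ apply: proper_card; apply/properP; split;
     [ apply/subsetP => p; rewrite !inE; case E: (lab1 p.1 p.2) => //= _; by rewrite (Hn1 _ _ E)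
     | exists (x, y); rewrite !inE /= ?Hxy //; by case: (lab1 x y) Hxy1 ] | ]).
- by move: Hk; rewrite leqn0 => /eqP E; rewrite E in Hlt.
- have [lab' [H1 [H2 H3]]] := IH lab1 HA Hv1 (leq_trans Hlt Hk).
  by exists lab'; split => //; split => // u v t /He1 /H3.
Qed.

Definition labOf {S : Type} (A : fstruct S) (x y : 'I_(fsize A)) : option S :=
  match excluded_middle_informative (exists r, Defs.frel A r x y) with
  | left h => Some (proj1_sig (constructive_indefinite_description _ h))
  | right _ => None
  end.
Arguments labOf {S} A x y.

Lemma labOfP S Ash (A : fstruct S) : in_A_ash Ash A ->
  forall x y s, labOf A x y = Some s <-> Defs.frel A s x y.
Proof.
move=> HA x y s; rewrite /labOf; case: excluded_middle_informative => [h|h].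
- case: constructive_indefinite_description => r Hr /=; split; first by case=> <-.
  move=> Hs; congr Some; exact: (proj1 (proj2 (proj2 (HA x y y r s))) Hr Hs).
- by split => // Hs; exfalso; apply: h; exists s.
Qed.

Lemma labOf_valid S Ash (A : fstruct S) : in_A_ash Ash A -> valid Ash (labOf A).
Proof.
move=> HA; have P := labOfP HA.
split; last split; last split.
- move=> x; case E: labOf => [s|] //; move/P: E => E; exfalso; exact: (proj1 (HA x x x s s) E).
- move=> x y; case E1: (labOf A x y) => [s|]; case E2: (labOf A y x) => [t|] //.
  + move/P: E1 => E1; move/P: E2 => E2.
    by congr Some; exact: (proj1 (proj2 (proj2 (HA x y y s t))) E1 (proj1 (proj2 (HA y x x t s)) E2)).
  + by move/P: E1 => /(proj1 (proj2 (HA x y y s s))) /P; rewrite E2.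
  + by move/P: E2 => /(proj1 (proj2 (HA y x x t t))) /P; rewrite E1.
- move=> x y z s /P E1 /P E2; exact: (proj1 (proj2 (proj2 (proj2 (HA x y z s s)))) E1 E2).
- move=> x T Tne HT; have [r0 _] := Tne; apply: (proj2 (proj2 (proj2 (proj2 (proj2 (HA x x x r0 r0)))))) => //.
  by move=> r /HT [u /P Hu]; exists u.
Qed.
Arguments labOf_valid {S Ash A}.

Definition sumlab {S : Type} {m n : nat} (la : 'I_m -> 'I_m -> option S)
  (lb : 'I_n -> 'I_n -> option S) (i j : 'I_(m + n)) : option S :=
  match fintype.split i, fintype.split j with
  | inl a, inl a' => la a a'
  | inr b, inr b' => lb b b'
  | _, _ => None
  end.

Lemma split_l m n (x : 'I_m) : fintype.split (lshift n x) = inl x.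
Proof. exact: (unsplitK (inl x : 'I_m + 'I_n)). Qed.
Lemma split_r m n (x : 'I_n) : fintype.split (rshift m x) = inr x.
Proof. exact: (unsplitK (inr x : 'I_m + 'I_n)). Qed.

Lemma valid_sum S Ash m n (la : 'I_m -> 'I_m -> option S) (lb : 'I_n -> 'I_n -> option S) :
  valid Ash la -> valid Ash lb -> valid Ash (sumlab la lb).
Proof.
move=> [A1 [A2 [A3 A5]]] [B1 [B2 [B3 B5]]]; rewrite /sumlab.
split; last split; last split.
- by move=> x; case: (fintype.split x).
- by move=> x y; case: (fintype.split x); case: (fintype.split y).
- move=> x y z s Hy Hz; apply: (can_inj splitK); move: Hy Hz.
  case: (fintype.split x) => a; case: (fintype.split y) => b; case: (fintype.split z) => c // H1 H2;
    [by rewrite (A3 _ _ _ _ H1 H2) | by rewrite (B3 _ _ _ _ H1 H2)].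
- move=> x T Tne HT; case E: (fintype.split x) => [a|a].
  + apply: (A5 a) => // r /HT [u]; rewrite E; case: (fintype.split u) => // b H; by exists b.
  + apply: (B5 a) => // r /HT [u]; rewrite E; case: (fintype.split u) => // b H; by exists b.
Qed.

Definition ofLab {S : Type} {N : nat} (lab : 'I_N -> 'I_N -> option S) : fstruct S :=
  @FStruct S N (fun s (u v : 'I_N) => lab u v = Some s).

Lemma ofLab_in S (Ash : (S -> Prop) -> Prop) N (lab : 'I_N -> 'I_N -> option S) :
  valid Ash lab -> (forall x y, x <> y -> lab x y <> None) -> in_A_ash Ash (ofLab lab).
Proof.
move=> [H1 [H2 [H3 H5]]] Hf x y z s t /=.
split; first by rewrite H1.
split; first by rewrite H2.
split; first congruence.
split; first exact: H3.
split; last exact: H5.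
by move=> xy; case E: (lab x y) => [r|]; [exists r | exfalso; exact: Hf xy E].
Qed.

Lemma embed_lab S (Ash : (S -> Prop) -> Prop) (A : fstruct S) N (lab : 'I_N -> 'I_N -> option S)
  (f : 'I_(fsize A) -> 'I_N) :
  in_A_ash Ash A -> valid Ash lab -> injective f ->
  (forall x y t, labOf A x y = Some t -> lab (f x) (f y) = Some t) ->
  @embedding S A (ofLab lab) f.
Proof.
move=> HA [H1 _] finj Hf; split => // s x y /=.
case: (eqVneq x y) => [<-|xy].
- split; last by rewrite H1.
  by move=> H; exfalso; exact: (proj1 (HA x x x s s) H).
- have [r Hr] := proj1 (proj2 (proj2 (proj2 (proj2 (HA x y y s s))))) (elimT negP xy \o (introT eqP)).
  move/(labOfP HA): Hr => Hr.
  by rewrite -(labOfP HA) (Hf _ _ _ Hr) Hr.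
Qed.

Lemma down S (Ash : (S -> Prop) -> Prop) (A B : fstruct S) :
  in_A_ash Ash A -> embeds B A -> in_A_ash Ash B.
Proof.
move=> HA [f [finj Hf]] x y z s t.
have [A1 [A2 [A3 [A3' [A4 A5]]]]] := HA (f x) (f y) (f z) s t.
split; first by rewrite Hf.
split; first by rewrite !Hf.
split; first by rewrite !Hf.
split; first by rewrite !Hf => K1 K2; apply: finj; exact: A3' K1 K2.
split.
- move=> xy; have [r Hr] : exists r, Defs.frel A r (f x) (f y).
    by apply: A4 => E; apply: xy; exact: finj E.
  by exists r; apply/Hf.
- move=> T Tne HT; have [r0 _] := Tne.
  apply: (proj2 (proj2 (proj2 (proj2 (proj2 (HA (f x) (f x) (f x) r0 r0)))))) => //.
  by move=> r /HT [u /Hf Hu]; exists (f u).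
Qed.

Theorem lemma5 (S : Type) (Ash : (S -> Prop) -> Prop) :
  is_ash Ash -> is_ideal_Omega (in_A_ash Ash).
Proof.
move=> HAsh; split.
  by exists (@FStruct S 0 (fun _ _ _ => False)) => [[x Hx]].
split; first exact: down.
move=> A B HA HB.
have Hv0 := valid_sum (labOf_valid HA) (labOf_valid HB).
have [lab [Hv [Hf He]]] := complete HAsh Hv0 (leqnn _).
exists (ofLab lab); split; first exact: ofLab_in Hv Hf.
split.
- exists (lshift (fsize B)); apply: (embed_lab HA Hv); first exact: lshift_inj.
  by move=> x y t H; apply: He; rewrite /sumlab !split_l.
- exists (@rshift (fsize A) (fsize B)); apply: (embed_lab HB Hv); first exact: rshift_inj.
  by move=> x y t H; apply: He; rewrite /sumlab !split_r.
Qed.
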